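(* In the algorithm Mono-DMFW described in the context, let $\bar{\mathbf{x}}^{(k)}(q)=\frac1N\sum_{i=1}^N\mathbf{x}_i^{(k)}(q)$. If the weight matrix $\mathbf{A}$ is symmetric and doubly stochastic with $\beta<1$, then for any $k\in[K]$ and $q\in[Q]$, $$\sqrt{\sum_{i=1}^{N}\|\mathbf{x}_{i}^{(k)}(q)-\bar{\mathbf{x}}^{(k)}(q)\|^{2}}\le\frac{\sqrt{N}r(\mathcal{K})}{K(1-\beta)}.$$
   Context: $\mathcal{K}\subseteq\mathbb{R}^n$ is a bounded convex set with $r(\mathcal{K})=\max_{\mathbf{x}\in\mathcal{K}}\|\mathbf{x}\|$. $N$ nodes on a connected undirected graph with neighbor sets $\mathcal{N}_i$; weight matrix $\mathbf{A}=[a_{ij}]\in\mathbb{R}_+^{N\times N}$ with $a_{ij}=0$ if $j\notin\mathcal{N}_i\cup\{i\}$; $\beta=\max(|\lambda_2(\mathbf{A})|,|\lambda_N(\mathbf{A})|)$ for eigenvalues $1=\lambda_1\ge\dots\ge\lambda_N\ge-1$. In Mono-DMFW, for each block $q\in[Q]$, $\mathbf{x}_i^{(0)}(q)=\mathbf{0}$, and for $k=1,\dots,K$ each node $i$ receives a point $\mathbf{v}_i^{(k)}(q)\in\mathcal{K}$ (output of an online linear optimization oracle) and sets $\mathbf{x}_i^{(k)}(q)=\sum_{j\in\mathcal{N}_i\cup\{i\}}a_{ij}\mathbf{x}_j^{(k-1)}(q)+\frac1K\mathbf{v}_i^{(k)}(q)$. *)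

(* Defs.v *)
From HB Require Import structures.
From mathcomp Require Import all_boot all_order all_algebra.
Set Implicit Arguments. Unset Strict Implicit. Unset Printing Implicit Defensive.
Import Order.TTheory GRing.Theory Num.Theory.
Local Open Scope ring_scope.

Definition vnorm (R : rcfType) (n : nat) (v : 'rV[R]_n) : R :=
  Num.sqrt (\sum_(j < n) v 0 j ^+ 2).

Definition convex_set (R : rcfType) (n : nat) (K : pred 'rV[R]_n) : Prop :=
  forall x y (t : R), x \in K -> y \in K -> 0 <= t <= 1 ->
    t *: x + (1 - t) *: y \in K.

Definition bounded_set (R : rcfType) (n : nat) (K : pred 'rV[R]_n) : Prop :=
  exists M : R, forall x, x \in K -> vnorm x <= M.

Definition is_max_norm (R : rcfType) (n : nat) (K : pred 'rV[R]_n) (r : R) : Prop :=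
  (exists2 x, x \in K & vnorm x = r) /\ (forall x, x \in K -> vnorm x <= r).

Definition undirected_connected_graph (N : nat) (e : rel 'I_N) : Prop :=
  [/\ symmetric e, irreflexive e & forall i j : 'I_N, connect e i j].

Definition graph_weight_matrix (R : rcfType) (N : nat) (e : rel 'I_N) (A : 'M[R]_N) : Prop :=
  (forall i j, 0 <= A i j) /\ (forall i j, ~~ e i j -> j != i -> A i j = 0).

Definition symmetric_mx (R : rcfType) (N : nat) (A : 'M[R]_N) : Prop := A^T = A.

Definition doubly_stochastic (R : rcfType) (N : nat) (A : 'M[R]_N) : Prop :=
  (forall i j, 0 <= A i j) /\
  (forall i, \sum_(j < N) A i j = 1) /\ (forall j, \sum_(i < N) A i j = 1).

Definition sorted_eigenvalues (R : rcfType) (N : nat) (A : 'M[R]_N) (lam : seq R) : Prop :=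
  [/\ size lam = N, sorted (fun a b => b <= a) lam &
      char_poly A = \prod_(l <- lam) ('X - l%:P)].

(* beta = max(|lambda_2|, |lambda_N|) (1-based indices) *)
Definition beta_of (R : rcfType) (lam : seq R) : R :=
  Num.max `|nth 0 lam 1| `|nth 0 lam (size lam).-1|.

Definition node_avg (R : rcfType) (n N : nat) (x : 'I_N -> 'rV[R]_n) : 'rV[R]_n :=
  N%:R^-1 *: \sum_(i < N) x i.

(* Mono-DMFW iterates: x q k i for block q, step k, node i *)
Definition mono_dmfw_iterates (R : rcfType) (n N Q K : nat) (e : rel 'I_N)
  (A : 'M[R]_N) (v x : 'I_Q -> nat -> 'I_N -> 'rV[R]_n) : Prop :=
  forall q : 'I_Q,
    (forall i, x q 0%N i = 0) /\
    (forall k i, (1 <= k <= K)%N ->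
       x q k i = \sum_(j < N | e i j || (j == i)) A i j *: x q k.-1 j
                 + K%:R^-1 *: v q k i).

(* Main.v *)
Require Import Defs.
From HB Require Import structures.
From mathcomp Require Import all_boot all_order all_algebra.
From mathcomp Require Import ring lra.
Import Order.TTheory GRing.Theory Num.Theory.
Local Open Scope ring_scope.

Lemma cs (R : rcfType) (I : finType) (a b : I -> R) :
  \sum_i a i * b i <= Num.sqrt (\sum_i a i ^+ 2) * Num.sqrt (\sum_i b i ^+ 2).
Proof.
set A2 := \sum_i a i ^+ 2; set B2 := \sum_i b i ^+ 2.
have A0 : 0 <= A2 by apply: sumr_ge0 => i _; exact: sqr_ge0.
have B0 : 0 <= B2 by apply: sumr_ge0 => i _; exact: sqr_ge0.
set sa := Num.sqrt A2; set sb := Num.sqrt B2.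
have sa2 : sa ^+ 2 = A2 by rewrite sqr_sqrtr.
have sb2 : sb ^+ 2 = B2 by rewrite sqr_sqrtr.
have sa0 : 0 <= sa := sqrtr_ge0 _. have sb0 : 0 <= sb := sqrtr_ge0 _.
have zero_case : forall c d : I -> R, \sum_i c i ^+ 2 = 0 -> \sum_i c i * d i = 0.
  move=> c d h; apply: big1 => i _.
  have := @psumr_eq0P _ _ predT (fun i => c i ^+ 2) (fun i _ => sqr_ge0 (c i)) h i isT.
  by move=> /eqP; rewrite sqrf_eq0 => /eqP ->; rewrite mul0r.
have [sa_0|sa_pos] := eqVneq sa 0.
  have hA : \sum_i a i ^+ 2 = 0 by rewrite -/A2 -sa2 sa_0 expr0n.
  by rewrite sa_0 mul0r (zero_case a b hA).
have [sb_0|sb_pos] := eqVneq sb 0.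
  have hB : \sum_i b i ^+ 2 = 0 by rewrite -/B2 -sb2 sb_0 expr0n.
  rewrite sb_0 mulr0 (eq_bigr (fun i => b i * a i)); last by move=> i _; rewrite mulrC.
  by rewrite (zero_case b a hB).
have sap : 0 < sa by rewrite lt_neqAle eq_sym sa_pos.
have sbp : 0 < sb by rewrite lt_neqAle eq_sym sb_pos.
have h : 0 <= \sum_i (sb * a i - sa * b i) ^+ 2 by apply: sumr_ge0 => i _; exact: sqr_ge0.
have e : \sum_i (sb * a i - sa * b i) ^+ 2 = sb^+2 * A2 - 2 * sa * sb * (\sum_i a i * b i) + sa^+2 * B2.
  rewrite /A2 /B2 !mulr_sumr -sumrB -big_split /=; apply: eq_bigr => i _; ring.
rewrite e -sa2 -sb2 in h.
set S := \sum_i a i * b i in h *.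
have p0 : 0 < sa * sb by rewrite mulr_gt0.
have h2 : (sa * sb) * S <= (sa * sb) * (sa * sb).
  rewrite -subr_ge0; rewrite (_ : _ - _ = (sb ^+ 2 * sa ^+ 2 - 2 * sa * sb * S + sa ^+ 2 * sb ^+ 2) / 2); last by field.
  by rewrite divr_ge0.
by rewrite ler_pM2l in h2.
Qed.

Lemma mink (R : rcfType) (I : finType) (a b : I -> R) :
  Num.sqrt (\sum_i (a i + b i) ^+ 2) <=
  Num.sqrt (\sum_i a i ^+ 2) + Num.sqrt (\sum_i b i ^+ 2).
Proof.
have s0 := addr_ge0 (sqrtr_ge0 (\sum_i a i ^+ 2)) (sqrtr_ge0 (\sum_i b i ^+ 2)).
rewrite -(ger0_norm s0) -sqrtr_sqr ler_sqrt; last exact: sqr_ge0.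
have A0 : 0 <= \sum_i a i ^+ 2 by apply: sumr_ge0 => i _; exact: sqr_ge0.
have B0 : 0 <= \sum_i b i ^+ 2 by apply: sumr_ge0 => i _; exact: sqr_ge0.
have e : \sum_i (a i + b i) ^+ 2 = \sum_i a i ^+ 2 + 2 * (\sum_i a i * b i) + \sum_i b i ^+ 2.
  rewrite mulr_sumr -!big_split /=; apply: eq_bigr => i _; ring.
rewrite e sqrrD !sqr_sqrtr // lerD2r lerD2l mulr_natl ler_wMn2r //.
exact: cs.
Qed.

Lemma var_le (R : rcfType) N (a : 'I_N -> R) : (0 < N)%N ->
  \sum_i (a i - N%:R^-1 * \sum_j a j) ^+ 2 <= \sum_i a i ^+ 2.
Proof.
move=> N0; set m := N%:R^-1 * \sum_j a j.
have hN : N%:R != 0 :> R by rewrite pnatr_eq0 -lt0n.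
have hS : \sum_j a j = N%:R * m by rewrite /m mulrA mulfV // mul1r.
rewrite (eq_bigr (fun i => a i ^+ 2 - (2 * m * a i - m ^+ 2))); last by move=> i _; ring.
rewrite sumrB sumrB -mulr_sumr hS sumr_const card_ord gerBl -mulr_natl.
rewrite (_ : _ - _ = N%:R * m ^+ 2); last by ring.
by rewrite mulr_ge0 ?ler0n ?sqr_ge0.
Qed.

From mathcomp Require Import complex.

Section Helpers.
Local Open Scope sesquilinear_scope.

Lemma char_poly_conj (F : fieldType) n (P D : 'M[F]_n) : P \in unitmx ->
  char_poly (invmx P *m D *m P) = char_poly D.
Proof.
move=> Pu.
have e : char_poly_mx (invmx P *m D *m P) =
   map_mx polyC (invmx P) *m char_poly_mx D *m map_mx polyC P.
  rewrite /char_poly_mx mulmxBr mulmxBl -!map_mxM; congr (_ - _).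
  by rewrite scalar_mxC -mulmxA -map_mxM mulVmx // map_mx1 mulmx1.
rewrite /char_poly e !det_mulmx !det_map_mx mulrC mulrA -rmorphM -det_mulmx.
by rewrite mulmxV // det1 mul1r.
Qed.

Lemma char_poly_diag (F : fieldType) n (d : 'rV[F]_n) :
  char_poly (diag_mx d) = \prod_(i < n) ('X - (d 0 i)%:P).
Proof.
rewrite char_poly_trig ?diag_mx_is_trig //; apply: eq_bigr => i _.
by rewrite mxE eqxx mulr1n.
Qed.

Section Key.
Variable C : numClosedFieldType.

Definition sqn n (u : 'rV[C]_n) := (u *m u ^t* ) 0 0.
Arguments sqn {n}.

Lemma sqnE n (u : 'rV[C]_n) : sqn u = \sum_i u 0 i * (u 0 i)^*%R.
Proof. by rewrite /sqn !mxE; apply: eq_bigr => i _; rewrite !mxE. Qed.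

Lemma sqn_unitary n (u : 'rV[C]_n) (P : 'M_n) : P \is unitarymx -> sqn (u *m P) = sqn u.
Proof.
move=> /unitarymxP hP; rewrite /sqn trmx_mul map_mxM !mulmxA -(mulmxA u) hP mulmx1 //.
Qed.

Lemma sqn_diag n (z d : 'rV[C]_n) : sqn (z *m diag_mx d) = \sum_i (z 0 i * (z 0 i)^*%R) * (d 0 i * (d 0 i)^*%R).
Proof.
rewrite sqnE; apply: eq_bigr => i _; rewrite mul_mx_diag !mxE rmorphM /=.
by rewrite mulrACA.
Qed.

Lemma key N (A : 'M[C]_N) (lc : seq C) (b : C) :
  (0 < N)%N -> A \is normalmx ->
  char_poly A = \prod_(l <- lc) ('X - l%:P) ->
  (forall j, (0 < j < size lc)%N -> `|nth 0 lc j| <= b) -> 0 <= b -> b < 1 ->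
  (const_mx 1 : 'rV_N) *m A = const_mx 1 ->
  forall y : 'rV_N, \sum_i y 0 i = 0 ->
  sqn (y *m A) <= b ^+ 2 * sqn y.
Proof.
move=> N0 An hchar hb b0 b1 hA1 y hy.
set P := spectralmx A; set d := spectral_diag A.
have /orthomx_spectralP hAe := An.
have Pu : P \is unitarymx := spectral_unitarymx A.
have Pinv : invmx P = P^t* := invmx_unitary Pu.
have PPt : P *m P^t* = 1%:M := unitarymxP Pu.
have PtP : P^t* *m P = 1%:M by rewrite -Pinv mulVmx // spectral_unit.
have one0 : const_mx 1 != 0 :> 'rV[C]_N.
  apply/negP => /eqP/rowP/(_ (Ordinal N0)); rewrite !mxE => /eqP; by rewrite oner_eq0.
have inlc : forall a, eigenvalue A a -> a \in lc.
  by move=> a; rewrite eigenvalue_root_char hchar root_prod_XsubC.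
have PA : P *m A = diag_mx d *m P.
  by rewrite hAe !mulmxA mulmxV ?spectral_unit // mul1mx.
have d_in : forall k, d 0 k \in lc.
  move=> k; apply: inlc; apply/eigenvalueP; exists (row k P).
    rewrite -row_mul PA mul_diag_mx; apply/rowP => j; rewrite !mxE //.
  apply/negP => /eqP rk0.
  have : row k (P *m P^t* ) = 0 by rewrite row_mul rk0 mul0mx.
  rewrite PPt row1 => /rowP/(_ k); rewrite !mxE !eqxx /= => /eqP; by rewrite oner_eq0.
have one_in : 1 \in lc.
  apply: inlc; apply/eigenvalueP; exists (const_mx 1) => //; by rewrite scale1r.
have small : forall a, a \in lc -> a != nth 0 lc 0 -> `|a| <= b.
  move=> a ain ne; have := nth_index 0 ain; have := index_mem a lc; rewrite ain => isz ea.
  rewrite -ea hb // isz andbT lt0n; apply/negP => /eqP i0.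
  by move: ne; rewrite -ea i0 eqxx.
have head1 : nth 0 lc 0 = 1.
  apply/eqP; rewrite eq_sym; apply/negP => /negP ne.
  by have := small _ one_in ne; rewrite normr1 => /(le_lt_trans)/(_ b1); rewrite ltxx.
have lcE : lc = 1 :: behead lc.
  by case: (lc) one_in head1 => [//|a l] _ /= ->.
have notin1 : 1 \notin behead lc.
  apply/negP => ain; have := nth_index 0 ain; have := index_mem 1 (behead lc).
  rewrite ain => isz ea.
  have := hb (index 1 (behead lc)).+1; rewrite lcE /= ltnS isz ea normr1 => /(_ isT).
  by move=> /le_lt_trans/(_ b1); rewrite ltxx.
have cnt : count_mem 1 lc = 1%N.
  by rewrite lcE /= eqxx (count_memPn notin1).
have pe : perm_eq lc [seq d 0 k | k <- enum 'I_N].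
  apply: prod_XsubC_eq; rewrite -hchar {1}hAe char_poly_conj ?spectral_unit //.
  by rewrite char_poly_diag big_map big_enum.
have uniq1 : forall k m, d 0 k = 1 -> d 0 m = 1 -> k = m.
  move=> k m dk dm; apply/eqP; apply/negP => /negP km.
  move: cnt; rewrite (permP pe) -sum1_count big_map big_enum_cond /=.
  rewrite (bigD1 k) /=; last by rewrite dk.
  rewrite (bigD1 m) /=; last by rewrite dm eqxx eq_sym.
  by [].
set w := (const_mx 1 : 'rV_N) *m P^t*.
have oneE : (const_mx 1 : 'rV_N) = w *m P by rewrite /w -mulmxA PtP mulmx1.
have wd : w *m diag_mx d = w.
  have := hA1; rewrite {1}hAe Pinv !mulmxA -/w => h.
  have := congr1 (fun M => M *m P^t* ) h; by rewrite /= -mulmxA PPt mulmx1.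
have w0 : forall m, d 0 m != 1 -> w 0 m = 0.
  move=> m ne; have /rowP/(_ m) := wd; rewrite mul_mx_diag mxE => e.
  apply/eqP; move: ne; apply: contraR => wn.
  by rewrite -[X in _ = X]mulr1 in e; rewrite (mulfI wn e).
set z := y *m P^t*.
have yw : (z *m w^t* ) 0 0 = 0.
  rewrite /z -mulmxA -map_mxM -trmx_mul -oneE !mxE -[RHS]hy.
  by apply: eq_bigr => i _; rewrite !mxE rmorph1 mulr1.
have yA : y *m A = z *m diag_mx d *m P by rewrite {1}hAe Pinv !mulmxA.
rewrite yA sqn_unitary // (_ : sqn y = sqn z); last by rewrite /z sqn_unitary // trmxC_unitary.
clearbody w z.
rewrite sqn_diag sqnE mulr_sumr; apply: ler_sum => k _.
have [dle|dgt] := boolP (`|d 0 k| <= b).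
  rewrite -!normCK mulrC; apply: ler_wpM2r; first exact: exprn_ge0.
  by rewrite lerXn2r // nnegrE.
have dk1 : d 0 k = 1.
  rewrite -head1; apply/eqP; apply/negP => /negP ne.
  by move: dgt; rewrite small.
have zk : z 0 k = 0.
  move: yw; rewrite !mxE (bigD1 k) //= big1 ?addr0.
    rewrite !mxE => /eqP; rewrite mulf_eq0 conjC_eq0 => /orP[/eqP //|/eqP wk0].
    exfalso; move: one0; rewrite oneE (_ : w = 0) ?mul0mx ?eqxx //.
    apply/rowP => m; rewrite mxE; have [->//|mk] := eqVneq m k.
    apply: w0; apply/negP => /eqP dm1; by move: mk; rewrite (uniq1 _ _ dm1 dk1) eqxx.
  move=> m mk; rewrite !mxE w0 ?conjC0 ?mulr0 //.
  by apply/negP => /eqP dm1; move: mk; rewrite (uniq1 _ _ dm1 dk1) eqxx.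
by rewrite zk !mul0r mulr0.
Qed.
End Key.

Section KR.
Variable R : rcfType.
Local Notation f := (real_complex R).
Lemma key_real N (A : 'M[R]_N) (lam : seq R) (be : R) :
  (0 < N)%N -> A^T = A -> (forall j, \sum_i A i j = 1) ->
  char_poly A = \prod_(l <- lam) ('X - l%:P) ->
  (forall j, (0 < j < size lam)%N -> `|nth 0 lam j| <= be) -> 0 <= be -> be < 1 ->
  forall y : 'rV[R]_N, \sum_i y 0 i = 0 ->
  \sum_i ((y *m A) 0 i)^+2 <= be^+2 * \sum_i (y 0 i)^+2.
Proof.
move=> N0 AT csum hchar hb b0 b1 y hy.
have fconj : forall x : R, (f x)^*%R = f x by move=> x; exact: conjc_real.
have fnorm : forall x : R, `|f x| = f `|x|.
  by move=> x; rewrite normc_def /= expr0n /= addr0 sqrtr_sqr.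
pose Ac := map_mx f A.
have Acn : Ac \is normalmx.
  apply/normalmxP; have -> : Ac ^t* = Ac; last by [].
  by apply/matrixP => i j; rewrite !mxE fconj; have := congr1 (fun M : 'M[R]_N => M i j) AT; rewrite mxE => ->.
have c1 : char_poly Ac = \prod_(l <- map f lam) ('X - l%:P).
  by rewrite -map_char_poly hchar map_prod_XsubC big_map.
have c2 : forall j, (0 < j < size (map f lam))%N -> `|nth 0 (map f lam) j| <= f be.
  move=> j; rewrite size_map => hj; rewrite (nth_map 0); last by case/andP: hj.
  by rewrite fnorm lecR hb.
have c3 : 0 <= f be by rewrite ler0c.
have c4 : f be < 1 by rewrite -(rmorph1 f) ltcR.
have c5 : (const_mx 1 : 'rV_N) *m Ac = const_mx 1.
  apply/rowP => j; rewrite !mxE; under eq_bigr do rewrite !mxE mul1r.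
  by rewrite -rmorph_sum csum rmorph1.
have c6 : \sum_i (map_mx f y) 0 i = 0.
  under eq_bigr do rewrite mxE.
  by rewrite -rmorph_sum hy rmorph0.
have := @key _ N Ac (map f lam) (f be) N0 Acn c1 c2 c3 c4 c5 _ c6.
have -> : @sqn R[i] N (map_mx f y *m Ac) = f (\sum_i ((y *m A) 0 i)^+2).
  rewrite -map_mxM sqnE rmorph_sum; apply: eq_bigr => i _.
  by rewrite !mxE fconj rmorphXn.
have -> : @sqn R[i] N (map_mx f y) = f (\sum_i (y 0 i)^+2).
  rewrite sqnE rmorph_sum; apply: eq_bigr => i _.
  by rewrite !mxE fconj rmorphXn.
by rewrite -rmorphXn -rmorphM lecR.
Qed.
End KR.

End Helpers.

Theorem lemma3 (R : rcfType) (n N Q K : nat)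
  (Kset : pred 'rV[R]_n) (rK : R) (e : rel 'I_N) (A : 'M[R]_N) (lam : seq R)
  (v x : 'I_Q -> nat -> 'I_N -> 'rV[R]_n) :
  convex_set Kset -> bounded_set Kset -> is_max_norm Kset rK ->
  undirected_connected_graph e ->
  graph_weight_matrix e A ->
  symmetric_mx A -> doubly_stochastic A ->
  sorted_eigenvalues A lam -> beta_of lam < 1 ->
  (forall q k i, (1 <= k <= K)%N -> v q k i \in Kset) ->
  mono_dmfw_iterates K e A v x ->
  forall (q : 'I_Q) (k : nat), (1 <= k <= K)%N ->
    Num.sqrt (\sum_(i < N) vnorm (x q k i - node_avg (x q k)) ^+ 2)
      <= Num.sqrt N%:R * rK / (K%:R * (1 - beta_of lam)).
Proof.
move=> _ _ [[x0 _ x0r] hmax] _ [_ Azero] Asym [_ [rsum csum]] [lsz lsort lchar] hbeta hv hiter q k hk.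
have rK0 : 0 <= rK by rewrite -x0r sqrtr_ge0.
have be0 : 0 <= beta_of lam by rewrite /beta_of le_max normr_ge0.
set be := beta_of lam in be0 hbeta *.
have [/eqP N0|] := boolP (N == 0%N).
  rewrite big1 ?sqrtr0; last by move=> [i hi]; exfalso; move: hi; rewrite N0.
  by rewrite N0 sqrtr0 !mul0r.
rewrite -lt0n => Npos.
have hb : forall j, (0 < j < size lam)%N -> `|nth 0 lam j| <= be.
  move=> j /andP[j0 jN].
  have leT_tr : transitive (fun a b : R => b <= a) by move=> ? ? ? h1 h2; exact: le_trans h2 h1.
  have leT_refl : reflexive (fun a b : R => b <= a) by move=> ?; exact: lexx.
  have hs := sorted_leq_nth leT_tr leT_refl 0 lsort.
  have h1 : nth 0 lam j <= nth 0 lam 1 by apply: hs; rewrite ?inE // (leq_ltn_trans j0 jN).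
  have h2 : nth 0 lam (size lam).-1 <= nth 0 lam j.
    apply: hs; rewrite ?inE //; first by rewrite prednK // (leq_ltn_trans _ jN).
    by rewrite -ltnS prednK // (leq_ltn_trans _ jN).
  have hl : `|nth 0 lam (size lam).-1| <= be by rewrite /be /beta_of le_max lexx orbT.
  have h1' : `|nth 0 lam 1| <= be by rewrite /be /beta_of le_max lexx.
  rewrite ler_norml; apply/andP; split.
    by move: hl; rewrite ler_norml => /andP[hl _]; exact: le_trans hl h2.
  exact: le_trans h1 (le_trans (ler_norm _) h1').
have hkey := @key_real R N A lam be Npos Asym csum lchar hb be0 hbeta.
have hN : N%:R != 0 :> R by rewrite pnatr_eq0 -lt0n.
pose D t i c := (x q t i - node_avg (x q t)) 0 c.
pose W t i c := (v q t i - node_avg (v q t)) 0 c.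
pose F (M : 'I_N -> 'I_n -> R) := Num.sqrt (\sum_i \sum_c M i c ^+ 2).
have avgE : forall (X : 'I_N -> 'rV[R]_n) c, node_avg X 0 c = N%:R^-1 * \sum_i X i 0 c.
  by move=> X c; rewrite /node_avg mxE summxE.
have itE : forall t i c, (1 <= t <= K)%N ->
    x q t i 0 c = \sum_j A i j * x q t.-1 j 0 c + K%:R^-1 * v q t i 0 c.
  move=> t i c ht; have [_ h] := hiter q; rewrite (h t i ht) mxE summxE mxE.
  congr (_ + _); rewrite big_mkcond; apply: eq_bigr => j _; rewrite mxE.
  case: ifP => // /negbT; rewrite negb_or => /andP[h1 h2].
  by rewrite Azero // mul0r.
have colD : forall t c, \sum_i D t i c = 0.
  move=> t c; rewrite /D; under eq_bigr do rewrite !mxE.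
  by rewrite sumrB sumr_const card_ord summxE -mulrnAl -mulr_natr mulVf // mul1r subrr.
have dE : forall t i c, D t i c = x q t i 0 c - N%:R^-1 * \sum_l x q t l 0 c.
  by move=> t i c; rewrite /D !mxE summxE.
have wE : forall t i c, W t i c = v q t i 0 c - N%:R^-1 * \sum_l v q t l 0 c.
  by move=> t i c; rewrite /W !mxE summxE.
have rec : forall t, (1 <= t <= K)%N -> forall i c,
    D t i c = \sum_j A i j * D t.-1 j c + K%:R^-1 * W t i c.
  move=> t ht i c.
  have sx : \sum_l x q t l 0 c = \sum_j x q t.-1 j 0 c + K%:R^-1 * \sum_l v q t l 0 c.
    rewrite (eq_bigr _ (fun l _ => itE t l c ht)) big_split /= -mulr_sumr exchange_big /=.
    congr (_ + _); apply: eq_bigr => j _; by rewrite -mulr_suml csum mul1r.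
  rewrite (dE t i c) (wE t i c) sx itE //.
  rewrite [in RHS](eq_bigr (fun j => A i j * x q t.-1 j 0 c - A i j * (N%:R^-1 * \sum_l x q t.-1 l 0 c))); last by move=> j _; rewrite dE mulrBr.
  rewrite sumrB -mulr_suml rsum mul1r.
  ring.
have hD0 : forall i c, D 0%N i c = 0.
  move=> i c; have [h0 _] := hiter q; rewrite dE h0 mxE big1 ?mulr0 ?subr0 // => l _.
  by rewrite h0 mxE.
have Fext : forall M1 M2, (forall i c, M1 i c = M2 i c) -> F M1 = F M2.
  move=> M1 M2 h; rewrite /F; congr Num.sqrt; apply: eq_bigr => i _; apply: eq_bigr => c _.
  by rewrite h.
have hM : forall M1 M2 : 'I_N -> 'I_n -> R, F (fun i c => M1 i c + M2 i c) <= F M1 + F M2.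
  move=> M1 M2; rewrite /F !pair_bigA /=.
  exact: (@mink R _ (fun p => M1 p.1 p.2) (fun p => M2 p.1 p.2)).
have hS : forall (a : R) M, 0 <= a -> F (fun i c => a * M i c) = a * F M.
  move=> a M a0; rewrite /F; under eq_bigr do under eq_bigr do rewrite exprMn.
  under eq_bigr do rewrite -mulr_sumr.
  rewrite -mulr_sumr sqrtrM ?sqr_ge0 // sqrtr_sqr ger0_norm //.
have Asy : forall i j, A j i = A i j.
  by move=> i j; have := congr1 (fun M : 'M[R]_N => M i j) Asym; rewrite mxE.
have hA : forall t, F (fun i c => \sum_j A i j * D t j c) <= be * F (D t).
  move=> t.
  have col : forall c, \sum_i (\sum_j A i j * D t j c) ^+ 2 <= be ^+ 2 * \sum_i D t i c ^+ 2.
    move=> c; have := hkey (\row_i D t i c).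
    rewrite (_ : \sum_i (\row_i0 D t i0 c) 0 i = 0); last first.
      by rewrite (eq_bigr (fun i => D t i c)) ?colD // => i _; rewrite mxE.
    move=> /(_ erefl).
    have -> : \sum_i ((\row_i0 D t i0 c) *m A) 0 i ^+ 2 = \sum_i (\sum_j A i j * D t j c) ^+ 2.
      apply: eq_bigr => i _; rewrite mxE; congr (_ ^+ 2); apply: eq_bigr => j _.
      by rewrite mxE mulrC Asy.
    have -> : \sum_i (\row_i0 D t i0 c) 0 i ^+ 2 = \sum_i D t i c ^+ 2.
      by apply: eq_bigr => i _; rewrite mxE.
    done.
  rewrite /F exchange_big [X in _ <= _ * Num.sqrt X]exchange_big /=.
  apply: le_trans (ler_wsqrtr (ler_sum _ (fun c _ => col c))) _.
  by rewrite -mulr_sumr sqrtrM ?sqr_ge0 // sqrtr_sqr ger0_norm.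
have hW : forall t, (1 <= t <= K)%N -> F (W t) <= Num.sqrt N%:R * rK.
  move=> t ht; rewrite /F exchange_big /=.
  have h1 : \sum_c \sum_i W t i c ^+ 2 <= \sum_c \sum_i v q t i 0 c ^+ 2.
    apply: ler_sum => c _; under eq_bigr do rewrite wE.
    exact: (@var_le R N (fun i => v q t i 0 c) Npos).
  apply: le_trans (ler_wsqrtr h1) _.
  rewrite exchange_big /=.
  have h2 : \sum_i \sum_c v q t i 0 c ^+ 2 <= N%:R * rK ^+ 2.
    have -> : N%:R * rK ^+ 2 = \sum_(i < N) rK ^+ 2 by rewrite sumr_const card_ord mulr_natl.
    apply: ler_sum => i _.
    have hvn := hmax _ (hv q t i ht).
    have e1 : \sum_c v q t i 0 c ^+ 2 = vnorm (v q t i) ^+ 2.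
      by rewrite /vnorm sqr_sqrtr //; apply: sumr_ge0 => c _; exact: sqr_ge0.
    rewrite e1 !expr2; apply: ler_pM => //; exact: sqrtr_ge0.
  apply: le_trans (ler_wsqrtr h2) _.
  by rewrite sqrtrM ?ler0n // sqrtr_sqr ger0_norm.
set c0 := K%:R^-1 * (Num.sqrt N%:R * rK).
have c00 : 0 <= c0 by rewrite mulr_ge0 ?invr_ge0 ?ler0n ?mulr_ge0 ?sqrtr_ge0.
have hbe1 : 0 < 1 - be by rewrite subr_gt0.
have ind : forall t, (t <= K)%N -> F (D t) <= c0 / (1 - be).
  elim => [_|t IH ht].
    rewrite (Fext _ (fun _ _ => 0)); last by move=> i c; exact: hD0.
    rewrite /F big1 ?sqrtr0; first exact: divr_ge0 c00 (ltW hbe1).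
    move=> i _; rewrite big1 // => c _; by rewrite expr0n.
  rewrite (Fext _ _ (rec t.+1 _)); last by rewrite ht.
  apply: le_trans (hM _ _) _.
  rewrite (hS _ (W t.+1)) ?invr_ge0 ?ler0n //.
  apply: le_trans (lerD (le_trans (hA t) (ler_wpM2l be0 (IH (ltnW ht))))
                        (ler_wpM2l _ (hW t.+1 _))) _.
  - by rewrite invr_ge0 ler0n.
  - by rewrite ht.
  rewrite -/c0 le_eqVlt; apply/orP; left; apply/eqP.
  field; by rewrite lt0r_neq0.
have -> : Num.sqrt (\sum_i vnorm (x q k i - node_avg (x q k)) ^+ 2) = F (D k).
  rewrite /F; congr Num.sqrt; apply: eq_bigr => i _.
  by rewrite /vnorm sqr_sqrtr //; apply: sumr_ge0 => c _; exact: sqr_ge0.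
apply: le_trans (ind k (andP hk).2) _.
have hK : K%:R != 0 :> R.
  by rewrite pnatr_eq0 -lt0n; case/andP: hk => h1 h2; exact: leq_trans h1 h2.
rewrite le_eqVlt; apply/orP; left; apply/eqP; rewrite /c0.
field; by rewrite hK lt0r_neq0.
Qed.
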